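(* Let $n\ge 3$, $c\ge 1$, and let $\upsilon':UV_n(c)\to\mathrm{GL}_n(\mathbb{C})$ be the representation \[ \upsilon'(\rho_i)=\mathrm{diag}\Big(I_{i-1},\begin{pmatrix}0&1\\ 1&0\end{pmatrix},I_{n-i-1}\Big),\qquad \upsilon'(\sigma_{i,t})=\mathrm{diag}\Big(I_{i-1},\begin{pmatrix}s_{1,t}&s_{2,t}\\ s_{3,t}&s_{4,t}\end{pmatrix},I_{n-i-1}\Big) \] for $1\le i\le n-1$, $1\le t\le c$, where $s_{j,t}\in\mathbb{C}$ with $s_{1,t}s_{4,t}-s_{2,t}s_{3,t}\neq0$. Then $\upsilon'$ is reducible if and only if either $s_{1,t}+s_{2,t}=1$ and $s_{3,t}+s_{4,t}=1$ for all $1\le t\le c$, or $s_{1,t}+s_{3,t}=1$ and $s_{2,t}+s_{4,t}=1$ for all $1\le t\le c$.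
   Context: $UV_n(c)$ is the group with generators $\rho_i$ ($1\le i\le n-1$), $\sigma_{i,t}$ ($1\le i\le n-1$, $1\le t\le c$) and relations $\rho_i\rho_{i+1}\rho_i=\rho_{i+1}\rho_i\rho_{i+1}$, $\rho_i\rho_j=\rho_j\rho_i$ ($|i-j|\ge2$), $\rho_i^2=1$, $\sigma_{i,t}\sigma_{j,\ell}=\sigma_{j,\ell}\sigma_{i,t}$ ($|i-j|\ge2$), $\sigma_{i,t}\rho_j=\rho_j\sigma_{i,t}$ ($|i-j|\ge2$), $\rho_i\rho_{i+1}\sigma_{i,t}=\sigma_{i+1,t}\rho_i\rho_{i+1}$ ($1\le i\le n-2$). $\mathrm{diag}(\cdot,\cdot,\cdot)$ denotes a block diagonal matrix and $I_r$ the $r\times r$ identity. A representation is reducible if $\mathbb{C}^n$ has a nonzero proper subspace invariant under all the image matrices. *)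

(* Defs.v *)
(* The complex numbers are modelled as R[i] = complex R
   for an arbitrary real-closed field R (e.g. the reals, giving C). *)
From HB Require Import structures.
From mathcomp Require Import all_boot all_order all_algebra.
From mathcomp Require Import complex.
Set Implicit Arguments. Unset Strict Implicit. Unset Printing Implicit Defensive.
Import Order.TTheory GRing.Theory Num.Theory.
Local Open Scope ring_scope.

(* diag(I_{i}, [[a b];[c d]], I_{n-i-2}) with 0-based i:
   the 2x2 block sits at rows/columns i and i+1 (paper's index i+1). *)
Definition blk2 (F : nzRingType) (n i : nat) (a b c d : F) : 'M[F]_n :=
  \matrix_(j < n, k < n)
    if (j == i :> nat) && (k == i :> nat) then a
    else if (j == i :> nat) && (k == i.+1 :> nat) then b
    else if (j == i.+1 :> nat) && (k == i :> nat) then c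
    else if (j == i.+1 :> nat) && (k == i.+1 :> nat) then d
    else (j == k)%:R.

Definition ups_rho (F : nzRingType) (n i : nat) : 'M[F]_n := blk2 n i 0 1 1 0.

Definition ups_sigma (F : nzRingType) (c : nat) (s1 s2 s3 s4 : 'I_c -> F)
  (n i : nat) (t : 'I_c) : 'M[F]_n := blk2 n i (s1 t) (s2 t) (s3 t) (s4 t).

Definition col_invariant (F : fieldType) (n : nat) (U M : 'M[F]_n) : Prop :=
  exists X : 'M[F]_n, M *m U = U *m X.

(* The matrix family is reducible: some nonzero proper subspace of F^n
   (the column space of U, of dimension \rank U) is invariant under all
   images of the generators rho_i, sigma_{i,t} (1 <= i <= n-1). *)
Definition ups_reducible (F : fieldType) (n c : nat)
  (s1 s2 s3 s4 : 'I_c -> F) : Prop :=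
  exists U : 'M[F]_n, [/\ (0 < \rank U)%N, (\rank U < n)%N &
    forall i : nat, (i < n.-1)%N ->
      col_invariant U (ups_rho F n i) /\
      forall t : 'I_c, col_invariant U (ups_sigma s1 s2 s3 s4 n i t)].

(* Main.v *)
Require Import Defs.
From HB Require Import structures.
From mathcomp Require Import all_boot all_order all_algebra.
From mathcomp Require Import complex.
Set Implicit Arguments. Unset Strict Implicit. Unset Printing Implicit Defensive.
Import Order.TTheory GRing.Theory Num.Theory.
Local Open Scope ring_scope.

Lemma neqN n (j p : 'I_n) : j != p -> (j == p :> nat) = false.
Proof. exact: negbTE. Qed.

Lemma blk2_colE (F : nzRingType) n m (p q : 'I_n) (a b c d : F) (w : 'M[F]_(n, m)) k x :
  (q : nat) = p.+1 ->
  (blk2 n p a b c d *m w) k x =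
  if k == p then a * w p x + b * w q x
  else if k == q then c * w p x + d * w q x else w k x.
Proof.
move=> hq.
have qp' : q != p by rewrite -val_eqE /= hq; rewrite neq_ltn ltnSn orbT.
have pq' : p != q by rewrite eq_sym.
have qp := neqN qp'; have pq := neqN pq'.
rewrite mxE.
case: (eqVneq k p) => [->|kp].
  rewrite (bigD1 p) //= (bigD1 q) //=.
  rewrite big1 ?addr0.
    by rewrite !mxE -hq eqxx pq qp /= ?eqxx.
  move=> j /andP[/neqN jp /neqN jq].
  have pj : (p == j) = false by rewrite eq_sym; apply: negbTE; rewrite -val_eqE jp.
  by rewrite !mxE -hq jp jq pj pq /= ?eqxx /= mul0r.
case: (eqVneq k q) => [->|kq].
  rewrite (bigD1 p) //= (bigD1 q) //=.
  rewrite big1 ?addr0.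
    by rewrite !mxE -hq eqxx pq qp /= ?eqxx.
  move=> j /andP[/neqN jp /neqN jq].
  have qj : (q == j) = false by rewrite eq_sym; apply: negbTE; rewrite -val_eqE jq.
  by rewrite !mxE -hq jp jq qj qp /= ?eqxx /= mul0r.
move: kp kq => /neqN kp /neqN kq.
rewrite (bigD1 k) //= big1 ?addr0.
  by rewrite !mxE -hq eqxx kp kq /= mul1r.
move=> j /neqN jk.
have kj : (k == j) = false by rewrite eq_sym; apply: negbTE; rewrite -val_eqE jk.
by rewrite !mxE -hq kp kq /= kj mul0r.
Qed.

From mathcomp Require Import ring zify.

Lemma blk2_rowE (F : fieldType) n (p q : 'I_n) (a b c d : F) (v : 'rV[F]_n) k :
  (q : nat) = p.+1 ->
  (v *m (blk2 n p a b c d)^T) 0 k =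
  if k == p then a * v 0 p + b * v 0 q
  else if k == q then c * v 0 p + d * v 0 q else v 0 k.
Proof. by move=> hq; rewrite -[v]trmxK -trmx_mul mxE (blk2_colE _ _ _ _ _ _ _ hq) !mxE. Qed.

Lemma blk2_tr (F : nzRingType) n (p q : 'I_n) (a b c d : F) :
  (q : nat) = p.+1 -> (blk2 n p a b c d)^T = blk2 n p a c b d.
Proof.
move=> hq.
have qp' : q != p by rewrite -val_eqE /= hq; rewrite neq_ltn ltnSn orbT.
have pq' : p != q by rewrite eq_sym.
have qp := neqN qp'; have pq := neqN pq'.
apply/matrixP => j k; rewrite !mxE -hq.
case jp: (j == p :> nat); case jq: (j == q :> nat);
case kp: (k == p :> nat); case kq: (k == q :> nat) => //=;
try (exfalso; lia).
all: try by rewrite eq_sym.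
Qed.

Lemma rho_act (F : fieldType) n (p q : 'I_n) (v : 'rV[F]_n) :
  (q : nat) = p.+1 ->
  v - v *m (blk2 n p 0 1 1 0)^T = (v 0 p - v 0 q) *: (delta_mx 0 p - delta_mx 0 q).
Proof.
move=> hq.
have qp' : q != p by rewrite -val_eqE /= hq; rewrite neq_ltn ltnSn orbT.
have pq' : p != q by rewrite eq_sym.
apply/rowP => k; rewrite [(v - _) 0 k]mxE [(- (_ : 'M_(1,n))) 0 k]mxE (blk2_rowE _ _ _ _ _ _ hq) !mxE.
case: (eqVneq k p) => [?|kp]; [|case: (eqVneq k q) => [?|kq]]; try subst k;
  rewrite ?eqxx ?(negbTE pq') ?(negbTE qp') /=; ring.
Qed.

Lemma e_act_p (F : fieldType) n (p q : 'I_n) (a b c d : F) :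
  (q : nat) = p.+1 ->
  (delta_mx 0 p : 'rV[F]_n) *m (blk2 n p a b c d)^T = a *: delta_mx 0 p + c *: delta_mx 0 q.
Proof.
move=> hq.
have qp' : q != p by rewrite -val_eqE /= hq; rewrite neq_ltn ltnSn orbT.
have pq' : p != q by rewrite eq_sym.
apply/rowP => k; rewrite (blk2_rowE _ _ _ _ _ _ hq) !mxE.
case: (eqVneq k p) => [?|kp]; [|case: (eqVneq k q) => [?|kq]]; try subst k;
  rewrite ?eqxx ?(negbTE pq') ?(negbTE qp') /=; ring.
Qed.

Lemma e_act_q (F : fieldType) n (p q : 'I_n) (a b c d : F) :
  (q : nat) = p.+1 ->
  (delta_mx 0 q : 'rV[F]_n) *m (blk2 n p a b c d)^T = b *: delta_mx 0 p + d *: delta_mx 0 q.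
Proof.
move=> hq.
have qp' : q != p by rewrite -val_eqE /= hq; rewrite neq_ltn ltnSn orbT.
have pq' : p != q by rewrite eq_sym.
apply/rowP => k; rewrite (blk2_rowE _ _ _ _ _ _ hq) !mxE.
case: (eqVneq k p) => [?|kp]; [|case: (eqVneq k q) => [?|kq]]; try subst k;
  rewrite ?eqxx ?(negbTE pq') ?(negbTE qp') /=; ring.
Qed.

Lemma e_act_o (F : fieldType) n (p q r : 'I_n) (a b c d : F) :
  (q : nat) = p.+1 -> r != p -> r != q ->
  (delta_mx 0 r : 'rV[F]_n) *m (blk2 n p a b c d)^T = delta_mx 0 r.
Proof.
move=> hq rp rq.
have pr : (p == r) = false by rewrite eq_sym (negbTE rp).
have qr : (q == r) = false by rewrite eq_sym (negbTE rq).
apply/rowP => k; rewrite (blk2_rowE _ _ _ _ _ _ hq) !mxE.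
case: (eqVneq k p) => [?|kp]; [|case: (eqVneq k q) => [?|kq]]; try subst k;
  rewrite ?eqxx ?pr ?qr /=; ring.
Qed.
From Stdlib Require Import Classical.

Lemma inord_eqF n i j : (i <= n)%N -> (j <= n)%N -> i != j ->
  (inord i == inord j :> 'I_n.+1) = false.
Proof. by move=> hi hj hij; rewrite -val_eqE /= !inordK ?ltnS //; apply: negbTE. Qed.

Lemma nat_prop (m i0 : nat) (P : nat -> Prop) : (i0 < m)%N -> P i0 ->
  (forall j, (j.+1 < m)%N -> P j -> P j.+1) ->
  (forall j, (j.+1 < m)%N -> P j.+1 -> P j) -> forall j, (j < m)%N -> P j.
Proof.
move=> hi0 H0 up dn j hj.
case: (leqP i0 j) => hij.
  have H : forall k, (i0 + k < m)%N -> P (i0 + k)%N.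
    elim => [|k IH] h; first by rewrite addn0.
    rewrite addnS; apply: (up); first lia.
    apply: (IH); lia.
  have -> : j = (i0 + (j - i0))%N by lia.
  apply: (H); lia.
have H : forall k, (k <= i0)%N -> P (i0 - k)%N.
  elim => [|k IH] h; first by rewrite subn0.
  apply: (dn); first lia.
  have -> : (i0 - k.+1).+1 = (i0 - k)%N by lia.
  apply: (IH); lia.
have -> : j = (i0 - (i0 - j))%N by lia.
apply: (H); lia.
Qed.

Lemma fwd (F : fieldType) (n c : nat) (hn : (2 <= n)%N) (s1 s2 s3 s4 : 'I_c -> F) :
  ups_reducible n.+1 s1 s2 s3 s4 ->
  (forall t, s1 t + s2 t = 1 /\ s3 t + s4 t = 1) \/
  (forall t, s1 t + s3 t = 1 /\ s2 t + s4 t = 1).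
Proof.
case=> U [r0 rn inv].
pose S := U^T.
have rS0 : (0 < \rank S)%N by rewrite mxrank_tr.
have rSn : (\rank S < n.+1)%N by rewrite mxrank_tr.
pose W (v : 'rV[F]_n.+1) := (v <= S)%MS.
have Hinv M : col_invariant U M -> forall v, W v -> W (v *m M^T).
  case=> X hX v hv; apply: submx_trans (submxMr _ hv) _.
  by rewrite -trmx_mul hX trmx_mul submxMl.
have WD u v : W u -> W v -> W (u + v) by move=> hu hv; apply: addmx_sub.
have WZ a v : W v -> W (a *: v) by move=> hv; apply: scalemx_sub.
have WB u v : W u -> W v -> W (u - v).
  by move=> hu hv; apply: (WD) => //; rewrite -scaleN1r; apply: (WZ).
have WZinv a v : a != 0 -> W (a *: v) -> W v.
  by move=> a0 h; rewrite -(scalerK a0 v); apply: (WZ).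
have Hrho (p q : 'I_n.+1) : (q : nat) = p.+1 -> forall v, W v ->
    W (v *m (blk2 n.+1 p 0 1 1 0)^T).
  move=> hq v hv; have hp : (p < n.+1.-1)%N by have := ltn_ord q; rewrite hq.
  exact: (Hinv _ (inv _ hp).1 v hv).
have Hsig (p q : 'I_n.+1) t : (q : nat) = p.+1 -> forall v, W v ->
    W (v *m (blk2 n.+1 p (s1 t) (s2 t) (s3 t) (s4 t))^T).
  move=> hq v hv; have hp : (p < n.+1.-1)%N by have := ltn_ord q; rewrite hq.
  exact: (Hinv _ ((inv _ hp).2 t) v hv).
have Hr (p q : 'I_n.+1) : (q : nat) = p.+1 -> forall v, W v -> v 0 p != v 0 q ->
    W (delta_mx 0 p - delta_mx 0 q).
  move=> hq v hv hne; apply: (WZinv (v 0 p - v 0 q)); first by rewrite subr_eq0.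
  rewrite -(rho_act v hq); exact: WB hv (Hrho _ _ hq v hv).
pose e (i : nat) : 'rV[F]_n.+1 := delta_mx 0 (inord i).
have eE i k : e i 0 k = (k == inord i)%:R by rewrite !mxE eqxx.
have vK i : (i <= n)%N -> (inord i : 'I_n.+1) = i :> nat by move=> h; rewrite inordK.
have Hadj i : (i < n)%N -> (inord i.+1 : 'I_n.+1) = (inord i : 'I_n.+1).+1 :> nat.
  by move=> h; rewrite !inordK //; lia.
have ene i j : (i <= n)%N -> (j <= n)%N -> i != j -> e i 0 (inord j) = 0.
  by move=> hi hj hij; rewrite eE inord_eqF // eq_sym.
have eeq i : e i 0 (inord i) = 1 by rewrite eE eqxx.
(* all e_i in W is impossible *)
have Hfull : W (e 0) -> (forall j, (j < n)%N -> W (e j - e j.+1)) -> False.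
  move=> h0 hd.
  have Hall : forall j, (j <= n)%N -> W (e j).
    elim => [|j IH] hj //.
    have -> : e j.+1 = e j - (e j - e j.+1) by rewrite opprB addrC subrK.
    apply: (WB); [apply: (IH); lia | apply: hd; lia].
  have : (1%:M <= S)%MS.
    apply/row_subP => i; rewrite row1 -(inord_val i); apply: (Hall).
    by rewrite -ltnS.
  move/mxrankS; rewrite mxrank1; lia.
case: (classic (exists w, W w /\ exists i, (i < n)%N /\ w 0 (inord i) != w 0 (inord i.+1))) => [[w [hw [i0 [hi0 hne]]]]|HB].
- right.
  have hd : forall j, (j < n)%N -> W (e j - e j.+1).
    apply: (nat_prop hi0).
    + exact: (Hr _ _ (Hadj _ hi0) w hw hne).
    + move=> j hj hP.
      have := Hr _ _ (Hadj _ hj) _ hP.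
      rewrite !mxE !eqxx !inord_eqF //; try lia.
      move=> H; apply: (H); rewrite ?subr0 ?sub0r ?oppr_eq0 ?oner_eq0 //.
    + move=> j hj hP.
      have hj' : (j < n)%N by lia.
      have := Hr _ _ (Hadj _ hj') _ hP.
      rewrite !mxE !eqxx !inord_eqF //; try lia.
      move=> H; apply: (H); rewrite ?subr0 ?sub0r ?oppr_eq0 ?oner_eq0 //=; rewrite ?mulr0n ?mulr1n eq_sym ?oner_eq0 //.
  have h0n : (0 < n)%N by lia.
  have hq := Hadj 0 h0n.
  have q20 : (inord 2 : 'I_n.+1) != inord 0 by rewrite inord_eqF.
  have q21 : (inord 2 : 'I_n.+1) != inord 1 by rewrite inord_eqF.
  have d0 := hd 0 h0n; have d1 := hd 1 hn.
  move=> t; split.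
  + have Wx0 : W (e 0 - e 2) by have := WD _ _ d0 d1; rewrite addrA subrK.
    have Wx := Hsig _ _ t hq _ Wx0.
    rewrite /e mulmxBl (e_act_p _ _ _ _ hq) (e_act_o _ _ _ _ hq q20 q21) in Wx.
    have : W ((s1 t + s3 t - 1) *: e 0).
      have -> : (s1 t + s3 t - 1) *: e 0 = (s1 t *: e 0 + s3 t *: e 1 - e 2)
          - ((1 - s3 t) *: (e 0 - e 1)) - (e 1 - e 2).
        by apply/rowP => k; rewrite !mxE; ring.
      by apply: (WB); [apply: (WB) => //; apply: (WZ)|].
    move=> Wa; apply/eqP; rewrite -subr_eq0; apply/negPn/negP => ha.
    exact: Hfull (WZinv _ _ ha Wa) hd.
  + have Wx := Hsig _ _ t hq _ d1.
    rewrite /e mulmxBl (e_act_q _ _ _ _ hq) (e_act_o _ _ _ _ hq q20 q21) in Wx.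
    have : W ((s2 t + s4 t - 1) *: e 0).
      have -> : (s2 t + s4 t - 1) *: e 0 = (s2 t *: e 0 + s4 t *: e 1 - e 2)
          - ((1 - s4 t) *: (e 0 - e 1)) - (e 1 - e 2).
        by apply/rowP => k; rewrite !mxE; ring.
      by apply: (WB); [apply: (WB) => //; apply: (WZ)|].
    move=> Wa; apply/eqP; rewrite -subr_eq0; apply/negPn/negP => ha.
    exact: Hfull (WZinv _ _ ha Wa) hd.
- left.
  have Heq w : W w -> forall i, (i <= n)%N -> w 0 (inord i) = w 0 (inord 0).
    move=> hw; elim => [|i IH] hi //.
    rewrite -IH; last lia.
    apply/eqP; apply/negPn/negP => hne; apply: (HB); exists w; split => //.
    by exists i; split; [lia | rewrite eq_sym].
  have Hconst w : W w -> w = w 0 (inord 0) *: const_mx 1.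
    move=> hw; apply/rowP => k; rewrite !mxE mulr1 -(inord_val k).
    by apply: (Heq) => //; rewrite -ltnS.
  have [i hi] : exists i, row i S != 0.
    apply: NNPP => H.
    have S0 : S = 0.
      apply/row_matrixP => i; rewrite row0; apply/eqP/negPn/negP => h.
      by apply: (H); exists i.
    by move: rS0; rewrite S0 mxrank0.
  have hw : W (row i S) by apply: row_sub.
  have w0 : row i S 0 (inord 0) != 0.
    apply/negP => /eqP h0; move: hi; by rewrite (Hconst _ hw) h0 scale0r eqxx.
  have Wone : W (const_mx 1).
    by apply: (WZinv _ _ w0); rewrite -Hconst.
  have h0n : (0 < n)%N by lia.
  have hq := Hadj 0 h0n.
  move=> t.
  have h := Heq _ (Hsig _ _ t hq _ Wone).
  have h1 := h 1 h0n; have h2 := h 2 hn.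
  rewrite !(blk2_rowE _ _ _ _ _ _ hq) !mxE !eqxx !inord_eqF // in h1 h2.
  rewrite /= !mulr1 in h1 h2.
  by split; [rewrite -h2 | rewrite h1 -h2].
Qed.

Lemma bwd1 (F : fieldType) (n c : nat) (hn : (2 <= n)%N) (s1 s2 s3 s4 : 'I_c -> F) :
  (forall t, s1 t + s2 t = 1 /\ s3 t + s4 t = 1) -> ups_reducible n s1 s2 s3 s4.
Proof.
move=> hs.
have hn0 : (0 < n)%N by lia.
pose o0 : 'I_n := Ordinal hn0.
exists (const_mx 1); split.
- rewrite lt0n mxrank_eq0; apply/eqP => /matrixP /(_ o0 o0); rewrite !mxE.
  by apply/eqP; rewrite oner_eq0.
- have -> : (const_mx 1 : 'M[F]_n) = (const_mx 1 : 'cV_n) *m (const_mx 1 : 'rV_n).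
    by apply/matrixP => j k; rewrite !mxE big_ord1 !mxE mulr1.
  apply: leq_ltn_trans (leq_trans (mxrankM_maxl _ _) (rank_leq_col _)) _; lia.
- move=> i hi.
  have hp : (i < n)%N by lia.
  have hq' : (i.+1 < n)%N by lia.
  pose p : 'I_n := Ordinal hp; pose q : 'I_n := Ordinal hq'.
  have hq : (q : nat) = p.+1 by [].
  have key a b c' d : a + b = 1 -> c' + d = 1 ->
      col_invariant (const_mx 1) (blk2 n p a b c' d).
    move=> hab hcd; exists 1%:M; rewrite mulmx1.
    apply/matrixP => j k; rewrite (blk2_colE _ _ _ _ _ _ _ hq) !mxE !mulr1.
    by case: ifP => _; [|case: ifP].
  split; first by apply: key; rewrite ?add0r ?addr0.
  by move=> t; case: (hs t) => h1 h2; apply: key.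
Qed.

Lemma bwd2 (F : fieldType) (n c : nat) (hn : (2 <= n)%N) (s1 s2 s3 s4 : 'I_c -> F) :
  (forall t, s1 t + s3 t = 1 /\ s2 t + s4 t = 1) -> ups_reducible n s1 s2 s3 s4.
Proof.
move=> hs.
have hn0 : (0 < n)%N by lia.
have hnl : (n.-1 < n)%N by lia.
pose o0 : 'I_n := Ordinal hn0.
pose l : 'I_n := Ordinal hnl.
have o0l : (o0 == l) = false by rewrite -val_eqE /=; apply/negbTE; lia.
pose Z : 'M[F]_n := \matrix_(j, k) (k == l)%:R.
pose P : 'M[F]_n := 1%:M - Z.
pose one : 'cV[F]_n := const_mx 1.
have Z1 : Z *m one = one.
  apply/matrixP => j x; rewrite !mxE (bigD1 l) //= big1 ?addr0.
    by rewrite !mxE eqxx mulr1.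
  by move=> k /negbTE kl; rewrite !mxE kl mul0r.
have P1 : P *m one = 0 by rewrite mulmxBl mul1mx Z1 subrr.
have sumP (v : 'rV[F]_n) : v *m one = 0 -> (v <= P)%MS.
  move=> hv.
  have hs0 : \sum_j v 0 j = 0.
    have h := congr1 (fun M : 'M_1 => M 0 0) hv; rewrite /= [in RHS]mxE mxE in h.
    apply: etrans h; by apply: eq_bigr => j _; rewrite !mxE mulr1.
  have vZ : v *m Z = 0.
    apply/rowP => k; rewrite !mxE.
    rewrite (eq_bigr (fun j => v 0 j * (k == l)%:R)); last by move=> j _; rewrite !mxE.
    by rewrite -mulr_suml hs0 mul0r.
  have <- : v *m P = v by rewrite mulmxBr mulmx1 vZ subr0.
  exact: submxMl.
have Pinv M : M^T *m one = one -> col_invariant P^T M.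
  move=> hM.
  have : (P *m M^T <= P)%MS.
    apply/row_subP => j; rewrite row_mul; apply: sumP.
    by rewrite -mulmxA hM -row_mul P1 row0.
  case/submxP => D hD; exists D^T.
  by rewrite -[M]trmxK -trmx_mul hD trmx_mul.
exists P^T; split; rewrite ?mxrank_tr.
- rewrite lt0n mxrank_eq0; apply/eqP => /matrixP /(_ o0 o0); rewrite !mxE eqxx o0l /=.
  by rewrite subr0; apply/eqP; rewrite oner_eq0.
- rewrite ltn_neqAle rank_leq_row andbT; apply/negP => /eqP hr.
  have hu : P \in unitmx by rewrite -row_free_unit /row_free hr.
  have := mulKmx hu one; rewrite P1 mulmx0 => /matrixP /(_ o0 0); rewrite !mxE.
  by apply/eqP; rewrite eq_sym oner_eq0.
- move=> i hi.
  have hp : (i < n)%N by lia.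
  have hq' : (i.+1 < n)%N by lia.
  pose p : 'I_n := Ordinal hp; pose q : 'I_n := Ordinal hq'.
  have hq : (q : nat) = p.+1 by [].
  have key a b c' d : a + c' = 1 -> b + d = 1 ->
      col_invariant P^T (blk2 n p a b c' d).
    move=> hab hcd; apply: Pinv; rewrite (blk2_tr _ _ _ _ hq).
    apply/matrixP => j k; rewrite (blk2_colE _ _ _ _ _ _ _ hq) !mxE !mulr1.
    by case: ifP => _; [|case: ifP].
  split; first by apply: key; rewrite ?add0r ?addr0.
  by move=> t; case: (hs t) => h1 h2; apply: key.
Qed.

Unset Implicit Arguments.
Set Strict Implicit.
Set Printing Implicit Defensive.

Theorem theorem3p4 (R : rcfType) (n c : nat) (hn : (3 <= n)%N) (hc : (1 <= c)%N)
  (s1 s2 s3 s4 : 'I_c -> R[i])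
  (hdet : forall t : 'I_c, s1 t * s4 t - s2 t * s3 t != 0) :
  ups_reducible n s1 s2 s3 s4 <->
  ((forall t : 'I_c, s1 t + s2 t = 1 /\ s3 t + s4 t = 1) \/
   (forall t : 'I_c, s1 t + s3 t = 1 /\ s2 t + s4 t = 1)).
Proof.
split.
- case: n hn => [|n] hn // H; apply: (fwd _ H); lia.
- case => H; [apply: bwd1 | apply: bwd2] => //; lia.
Qed.
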